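(* Let $\mathcal{V}$ be a pseudo-variety of $\mathbb{M}$-algebras and let $\mathcal{K}$ be the family of languages assigning to each alphabet $\Sigma$ the class of all languages over $\Sigma$ recognised by some algebra in $\mathcal{V}$. Then $\mathcal{K}$ is a variety of languages.
   Context: Fix a set $\Xi$ of sorts; $\mathsf{Pos}^\Xi$ is the category of $\Xi$-sorted families of partial orders with sort-wise monotone maps. $\mathbb{M}$ is a monad on $\mathsf{Pos}^\Xi$ ($\mathrm{flat},\mathrm{sing}$) preserving injective, surjective, bijective functions and preimages and using the standard ordering (order on $\mathbb{M}A$ is $\{(\mathbb{M}p(u),\mathbb{M}q(u)):u\in\mathbb{M}R\}$, $R$ the order of $A$). $\mathbb{M}$-algebras $\langle A,\pi\rangle$ satisfy $\pi\circ\mathbb{M}\pi=\pi\circ\mathrm{flat}$, $\pi\circ\mathrm{sing}=\mathrm{id}$; morphisms commute with products. An algebra is finitary if each $A_\xi$ is finite and it is generated by a finite $C\subseteq A$ (every element is $\pi(s)$ with $s\in\mathbb{M}C$). A quotient of $\mathfrak{B}$ is an algebra $\mathfrak{A}$ admitting a surjective morphism $\mathfrak{B}\to\mathfrak{A}$. For $\Delta\subseteq\Xi$, $A|_\Delta$ is the part of $A$ with sorts in $\Delta$, $\mathbb{M}|_\Delta A:=(\mathbb{M}(A|_\Delta))|_\Delta$ (a monad on $\mathsf{Pos}^\Delta$), and $\mathfrak{A}|_\Delta$ is the $\mathbb{M}|_\Delta$-algebra with universe $A|_\Delta$ and product the restriction of $\pi$ to $\mathbb{M}|_\Delta A$. An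 algebra $\mathfrak{B}$ is a sort-accumulation point of a class $\mathcal{A}$ if for every finite $\Delta\subseteq\Xi$ there is $\mathfrak{A}\in\mathcal{A}$ such that $\mathfrak{B}|_\Delta$ is a quotient of $\mathfrak{A}|_\Delta$ (as $\mathbb{M}|_\Delta$-algebras). A class $\mathcal{V}$ of finitary algebras is a pseudo-variety if it is closed under quotients, finitary subalgebras of finite products, and (finitary) sort-accumulation points. An alphabet is a finite unordered set $\Sigma$; a language is $K\subseteq\mathbb{M}_\xi\Sigma$; an algebra $\mathfrak{A}$ recognises $K$ if $K=\varphi^{-1}[P]$ for some morphism $\varphi:\mathbb{M}\Sigma\to\mathfrak{A}$ and upwards closed $P\subseteq A_\xi$. Contexts with hole of sort $\zeta$: $p\in\mathbb{M}(\Sigma+\{\Box\})$ with $\Box$ new of sort $\zeta$; $p[s]$ is the image of $p$ under the algebra morphism extending $\Box\mapsto s$, $c\mapsto\mathrm{sing}(c)$; derivative $p^{-1}[K]=\{s:p[s]\in K\}$. A variety of languages is a family $\mathcal{K}$ assigning to each alphabet $\Sigma$ a class $\mathcal{K}[\Sigma]$ of languages over $\Sigma$ closed under finite unions and intersections, inverse morphisms ($\psi^{-1}[K]\in\mathcal{K}[\Sigma]$ for $K\in\mathcal{K}[\Gamma]$ and algebra morphisms $\psi:\mathbb{M}\Sigma\to\mathbb{M}\Gamma$), and derivatives ($p^{-1}[K]\in\mathcal{K}[\Sigma]$ for $K\in\mathcal{K}[\Sigma]$ and contexts $p$). *)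

(* Defs.v *)
From Stdlib Require Import List ProofIrrelevance.
Set Implicit Arguments.
Unset Strict Implicit.

Section Defs.
Variable Xi : Type.

Record SPos := {
  car :> Xi -> Type;
  le : forall x, car x -> car x -> Prop;
  le_refl : forall x (a : car x), le a a;
  le_trans : forall x (a b c : car x), le a b -> le b c -> le a c;
  le_antisym : forall x (a b : car x), le a b -> le b a -> a = b }.

Record Hom (A B : SPos) := {
  fn :> forall x, A x -> B x;
  fn_mono : forall x (a b : A x), le a b -> le (fn a) (fn b) }.

Definition Hom_id (A : SPos) : Hom A A.
Proof. exists (fun x a => a). auto. Defined.

Definition Hom_comp (A B C : SPos) (g : Hom B C) (f : Hom A B) : Hom A C.
Proof. exists (fun x a => g x (f x a)). intros x a b h. apply fn_mono, fn_mono, h. Defined.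

Definition sub (A : SPos) (C : forall x, A x -> Prop) : SPos.
Proof.
  refine {| car := fun x => { a : A x | C x a };
            le := fun x a b => le (proj1_sig a) (proj1_sig b) |}.
  - intros; apply le_refl.
  - intros x a b c; apply le_trans.
  - intros x [a Ha] [b Hb] h1 h2; simpl in *.
    assert (a = b) by (apply le_antisym; auto). subst b.
    f_equal; apply proof_irrelevance.
Defined.

Definition incl (A : SPos) (C : forall x, A x -> Prop) : Hom (sub C) A.
Proof. exists (fun x a => proj1_sig a). auto. Defined.

Definition prodP (A B : SPos) : SPos.
Proof.
  refine {| car := fun x => (A x * B x)%type;
            le := fun x a b => le (fst a) (fst b) /\ le (snd a) (snd b) |}.
  - intros; split; apply le_refl.
  - intros x a b c [] []; split; eapply le_trans; eauto.
  - intros x [a1 a2] [b1 b2] [] []; simpl in *; f_equal; apply le_antisym; auto.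
Defined.

Definition ordrel (A : SPos) : SPos :=
  sub (A := prodP A A) (fun x pr => le (fst pr) (snd pr)).

Definition ordp (A : SPos) : Hom (ordrel A) A.
Proof. exists (fun x r => fst (proj1_sig r)). intros x a b []; auto. Defined.
Definition ordq (A : SPos) : Hom (ordrel A) A.
Proof. exists (fun x r => snd (proj1_sig r)). intros x a b []; auto. Defined.

Definition discrete (T : Xi -> Type) : SPos.
Proof.
  refine {| car := T; le := fun x a b => a = b |}; intros; subst; auto.
Defined.

Definition injective_on (T U : Type) (f : T -> U) := forall a b, f a = f b -> a = b.
Definition surjective_on (T U : Type) (f : T -> U) := forall b, exists a, f a = b.

Record Monad := {
  Mo : SPos -> SPos;
  Mf : forall A B, Hom A B -> Hom (Mo A) (Mo B);
  flat : forall A, Hom (Mo (Mo A)) (Mo A);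
  sing : forall A, Hom A (Mo A);
  Mf_id : forall A x (u : Mo A x), Mf (Hom_id A) x u = u;
  Mf_comp : forall A B C (g : Hom B C) (f : Hom A B) x (u : Mo A x),
      Mf (Hom_comp g f) x u = Mf g x (Mf f x u);
  flat_nat : forall A B (f : Hom A B) x (u : Mo (Mo A) x),
      Mf f x (flat A x u) = flat B x (Mf (Mf f) x u);
  sing_nat : forall A B (f : Hom A B) x (a : A x),
      Mf f x (sing A x a) = sing B x (f x a);
  flat_sing : forall A x (u : Mo A x), flat A x (sing (Mo A) x u) = u;
  flat_Msing : forall A x (u : Mo A x), flat A x (Mf (sing A) x u) = u;
  flat_flat : forall A x (u : Mo (Mo (Mo A)) x),
      flat A x (flat (Mo A) x u) = flat A x (Mf (flat A) x u);
  M_inj : forall A B (f : Hom A B),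
      (forall x, injective_on (f x)) -> forall x, injective_on (Mf f x);
  M_surj : forall A B (f : Hom A B),
      (forall x, surjective_on (f x)) -> forall x, surjective_on (Mf f x);
  M_bij : forall A B (f : Hom A B),
      (forall x, injective_on (f x) /\ surjective_on (f x)) ->
      forall x, injective_on (Mf f x) /\ surjective_on (Mf f x);
  (* preservation of preimages: M(f^-1[C]) = (Mf)^-1[M C],
     subobjects being identified with their images under M(incl) *)
  M_preim : forall A B (f : Hom A B) (C : forall x, B x -> Prop) x (u : Mo A x),
      (exists v : Mo (sub (fun y a => C y (f y a))) x, Mf (incl _) x v = u) <->
      (exists w : Mo (sub C) x, Mf (incl C) x w = Mf f x u);
  M_order : forall A x (s t : Mo A x),
      le s t <-> exists u : Mo (ordrel A) x,
                   Mf (ordp A) x u = s /\ Mf (ordq A) x u = t }.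

Variable M : Monad.

Record algebra := {
  acar : SPos;
  api : Hom (Mo M acar) acar;
  api_assoc : forall x (u : Mo M (Mo M acar) x),
      api x (Mf M api x u) = api x (flat M acar x u);
  api_unit : forall x (a : acar x), api x (sing M acar x a) = a }.

Definition is_morph (A B : algebra) (h : Hom (acar A) (acar B)) : Prop :=
  forall x (s : Mo M (acar A) x), h x (api A x s) = api B x (Mf M h x s).

Definition free (S : SPos) : algebra.
Proof.
  refine {| acar := Mo M S; api := flat M S |}.
  - intros; symmetry; apply flat_flat.
  - intros; apply flat_sing.
Defined.

Definition finite_type (T : Type) := exists l : list T, forall a, In a l.
Definition finite_subset (A : SPos) (C : forall x, A x -> Prop) :=
  exists l : list {x : Xi & A x}, forall x a, C x a -> In (existT _ x a) l.

Definition finitary (A : algebra) : Prop :=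
  (forall x, finite_type (acar A x)) /\
  exists C : forall x, acar A x -> Prop, finite_subset C /\
    forall x (a : acar A x), exists s : Mo M (sub C) x,
      api A x (Mf M (incl C) x s) = a.

Definition quotient_of (A B : algebra) : Prop :=
  exists h : Hom (acar B) (acar A), is_morph h /\ forall x, surjective_on (h x).

(** Restriction to a set of sorts Delta: A|_Delta (empty outside Delta). *)
Definition restr (D : Xi -> Prop) (A : SPos) : SPos := sub (A := A) (fun x _ => D x).

(** B|_D is a quotient of A|_D as M|_D-algebras: a surjective monotone map
    h : A|_D -> B|_D commuting with the restricted products
    (pi restricted to M|_D A, i.e. pi o M(incl) at sorts in D). *)
Definition restr_quotient (D : Xi -> Prop) (A B : algebra) : Prop :=
  exists h : Hom (restr D (acar A)) (restr D (acar B)),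
    (forall x, D x -> surjective_on (h x)) /\
    forall x (dx : D x) (s : Mo M (restr D (acar A)) x),
      proj1_sig (h x (exist _ (api A x (Mf M (incl _) x s)) dx)) =
      api B x (Mf M (incl _) x (Mf M h x s)).

Definition sort_accumulation_point (V : algebra -> Prop) (B : algebra) : Prop :=
  forall D : Xi -> Prop, (exists l : list Xi, forall x, D x -> In x l) ->
    exists A, V A /\ restr_quotient D A B.

(** Closure under finitary subalgebras of finite products is
    stated up to isomorphism: A is (isomorphic to) a subalgebra of the product
    of the F i iff there are morphisms h i : A -> F i that jointly form an
    order embedding into the product. *)
Definition pseudo_variety (V : algebra -> Prop) : Prop :=
  (forall A, V A -> finitary A) /\
  (forall A B, V A -> quotient_of B A -> V B) /\
  (forall (I : Type) (F : I -> algebra) (A : algebra)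
          (h : forall i, Hom (acar A) (acar (F i))),
     finite_type I -> (forall i, V (F i)) -> (forall i, is_morph (h i)) ->
     (forall x (a b : acar A x), le a b <-> forall i, le (h i x a) (h i x b)) ->
     finitary A -> V A) /\
  (forall B, finitary B -> sort_accumulation_point V B -> V B).

Definition alphabet (S : SPos) : Prop :=
  (forall x (a b : S x), le a b <-> a = b) /\
  exists l : list {x : Xi & S x}, forall x a, In (existT _ x a) l.

Definition recognises (A : algebra) (S : SPos) (xi : Xi) (K : Mo M S xi -> Prop) :=
  exists phi : Hom (Mo M S) (acar A), is_morph (A := free S) (B := A) phi /\
  exists P : acar A xi -> Prop,
    (forall a b, P a -> le a b -> P b) /\
    forall s, K s <-> P (phi xi s).

Definition lang_family := forall (S : SPos) (xi : Xi), (Mo M S xi -> Prop) -> Prop.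

Definition recognised_by (V : algebra -> Prop) : lang_family :=
  fun S xi K => exists A, V A /\ @recognises A S xi K.

(** Contexts: S + {hole}, the hole having sort zeta. *)
Definition holed (S : SPos) (zeta : Xi) : SPos :=
  discrete (fun x => (S x + (x = zeta))%type).

Definition hole_subst (S : SPos) (zeta : Xi) (s : Mo M S zeta) :
  Hom (holed S zeta) (Mo M S).
Proof.
  exists (fun x c => match c with
                     | inl a => sing M S x a
                     | inr e => eq_rect zeta (fun y => Mo M S y) s x (eq_sym e)
                     end).
  intros x a b h; simpl in h; subst; apply le_refl.
Defined.

(** p[s]: image of p under the algebra morphism M(S+hole) -> M S extending
    hole |-> s, c |-> sing c. *)
Definition fill (S : SPos) (zeta xi : Xi) (p : Mo M (holed S zeta) xi)
  (s : Mo M S zeta) : Mo M S xi :=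
  flat M S xi (Mf M (hole_subst s) xi p).

Definition variety_of_languages (K : lang_family) : Prop :=
  (forall S, alphabet S -> forall xi (L1 L2 : Mo M S xi -> Prop),
     K S xi L1 -> K S xi L2 -> K S xi (fun s => L1 s \/ L2 s)) /\
  (forall S, alphabet S -> forall xi (L1 L2 : Mo M S xi -> Prop),
     K S xi L1 -> K S xi L2 -> K S xi (fun s => L1 s /\ L2 s)) /\
  (forall S G, alphabet S -> alphabet G -> forall xi (L : Mo M G xi -> Prop)
     (psi : Hom (Mo M S) (Mo M G)), is_morph (A := free S) (B := free G) psi ->
     K G xi L -> K S xi (fun s => L (psi xi s))) /\
  (forall S, alphabet S -> forall zeta xi (L : Mo M S xi -> Prop)
     (p : Mo M (holed S zeta) xi),
     K S xi L -> K S zeta (fun s => L (fill p s))).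

End Defs.

(* Main.v *)
From Stdlib Require Import FunctionalExtensionality ProofIrrelevance Classical List.
Require Import Defs.
Set Implicit Arguments.
Unset Strict Implicit.
Lemma Hom_ext (Xi : Type) (A B : SPos Xi) (f g : Hom A B) :
  (forall x a, f x a = g x a) -> f = g.
Proof.
  destruct f as [f hf], g as [g hg]; simpl; intro H.
  assert (f = g) by (apply functional_extensionality_dep; intro x;
    apply functional_extensionality; apply H).
  subst g. f_equal. apply proof_irrelevance.
Qed.

Lemma Mf_comp_ext (Xi : Type) (M : Monad Xi) (A B C : SPos Xi) (h : Hom A C)
  (g : Hom B C) (f : Hom A B) :
  (forall x a, h x a = g x (f x a)) -> forall x u, Mf M h x u = Mf M g x (Mf M f x u).
Proof.
  intros H x u. rewrite <- Mf_comp. replace h with (Hom_comp g f); [reflexivity|]. apply Hom_ext. intros; simpl; symmetry; apply H.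
Qed.

Definition fstH (Xi : Type) (A B : SPos Xi) : Hom (prodP A B) A.
Proof. exists (fun x p => fst p). intros x a b []; auto. Defined.
Definition sndH (Xi : Type) (A B : SPos Xi) : Hom (prodP A B) B.
Proof. exists (fun x p => snd p). intros x a b []; auto. Defined.
Definition pairH (Xi : Type) (A B C : SPos Xi) (f : Hom C A) (g : Hom C B) : Hom C (prodP A B).
Proof. exists (fun x c => (f x c, g x c)). intros x a b h; split; simpl; apply fn_mono; auto. Defined.

Definition prod_api (Xi : Type) (M : Monad Xi) (A1 A2 : algebra M) :
  Hom (Mo M (prodP (acar A1) (acar A2))) (prodP (acar A1) (acar A2)) :=
  pairH (Hom_comp (api A1) (Mf M (fstH _ _))) (Hom_comp (api A2) (Mf M (sndH _ _))).

Lemma Mf_comp2 (Xi : Type) (M : Monad Xi) (A B B' C : SPos Xi)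
  (g : Hom B C) (f : Hom A B) (g' : Hom B' C) (f' : Hom A B') :
  (forall x a, g x (f x a) = g' x (f' x a)) -> forall x u,
  Mf M g x (Mf M f x u) = Mf M g' x (Mf M f' x u).
Proof.
  intros H x u. rewrite <- !Mf_comp.
  replace (Hom_comp g f) with (Hom_comp g' f'); [reflexivity|].
  apply Hom_ext. intros; simpl; symmetry; apply H.
Qed.

Definition prodA (Xi : Type) (M : Monad Xi) (A1 A2 : algebra M) : algebra M.
Proof.
  refine {| acar := prodP (acar A1) (acar A2); api := prod_api A1 A2 |}.
  - intros x u. simpl. f_equal.
    + rewrite (@Mf_comp2 _ M _ _ _ _ _ _ (api A1) (Mf M (fstH _ _))) by reflexivity.
      rewrite api_assoc, <- flat_nat. reflexivity.
    + rewrite (@Mf_comp2 _ M _ _ _ _ _ _ (api A2) (Mf M (sndH _ _))) by reflexivity.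
      rewrite api_assoc, <- flat_nat. reflexivity.
  - intros x [a1 a2]. simpl. rewrite !sing_nat. simpl. rewrite !api_unit. reflexivity.
Defined.

Lemma sig_eq (T : Type) (P : T -> Prop) (a b : {x : T | P x}) :
  proj1_sig a = proj1_sig b -> a = b.
Proof. destruct a, b; simpl; intro; subst; f_equal; apply proof_irrelevance. Qed.

Definition sub_api (Xi : Type) (M : Monad Xi) (B : algebra M) (C : forall x, acar B x -> Prop)
  (hC : forall x u, C x (api B x (Mf M (incl C) x u))) : Hom (Mo M (sub C)) (sub C).
Proof.
  exists (fun x u => exist _ (api B x (Mf M (incl C) x u)) (hC x u)).
  intros x a b h; simpl. apply fn_mono, fn_mono, h.
Defined.

Definition subA (Xi : Type) (M : Monad Xi) (B : algebra M) (C : forall x, acar B x -> Prop)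
  (hC : forall x u, C x (api B x (Mf M (incl C) x u))) : algebra M.
Proof.
  refine {| acar := sub C; api := sub_api hC |}.
  - intros x u. apply sig_eq. simpl.
    rewrite (@Mf_comp2 _ M _ _ _ _ _ _ (api B) (Mf M (incl C))) by reflexivity.
    rewrite api_assoc, <- flat_nat. reflexivity.
  - intros x a. apply sig_eq. simpl. rewrite sing_nat, api_unit. reflexivity.
Defined.

Lemma incl_morph (Xi : Type) (M : Monad Xi) (B : algebra M) (C : forall x, acar B x -> Prop)
  (hC : forall x u, C x (api B x (Mf M (incl C) x u))) :
  is_morph (A := subA hC) (B := B) (incl C).
Proof. intros x s. reflexivity. Qed.

Lemma comp_morph (Xi : Type) (M : Monad Xi) (A B C : algebra M)
  (g : Hom (acar B) (acar C)) (f : Hom (acar A) (acar B)) :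
  is_morph g -> is_morph f -> is_morph (Hom_comp g f).
Proof.
  intros hg hf x s. simpl. rewrite hf, hg. rewrite <- Mf_comp. reflexivity.
Qed.

Lemma fst_morph (Xi : Type) (M : Monad Xi) (A1 A2 : algebra M) :
  is_morph (A := prodA A1 A2) (B := A1) (fstH _ _).
Proof. intros x s. reflexivity. Qed.
Lemma snd_morph (Xi : Type) (M : Monad Xi) (A1 A2 : algebra M) :
  is_morph (A := prodA A1 A2) (B := A2) (sndH _ _).
Proof. intros x s. reflexivity. Qed.

Lemma pair_morph (Xi : Type) (M : Monad Xi) (A A1 A2 : algebra M)
  (f1 : Hom (acar A) (acar A1)) (f2 : Hom (acar A) (acar A2)) :
  is_morph f1 -> is_morph f2 -> is_morph (A := A) (B := prodA A1 A2) (pairH f1 f2).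
Proof.
  intros h1 h2 x s. simpl. rewrite h1, h2. f_equal.
  - rewrite <- Mf_comp.
    assert (E : Hom_comp (fstH _ _) (pairH f1 f2) = f1) by (apply Hom_ext; reflexivity).
    rewrite E; reflexivity.
  - rewrite <- Mf_comp.
    assert (E : Hom_comp (sndH _ _) (pairH f1 f2) = f2) by (apply Hom_ext; reflexivity).
    rewrite E; reflexivity.
Qed.

Definition imgP (Xi : Type) (M : Monad Xi) (S : SPos Xi) (B : algebra M)
  (phi : Hom (Mo M S) (acar B)) : forall x, acar B x -> Prop :=
  fun x b => exists s, phi x s = b.
Arguments imgP [Xi M S B] phi x b.

Definition coreH (Xi : Type) (M : Monad Xi) (S : SPos Xi) (B : algebra M)
  (phi : Hom (Mo M S) (acar B)) : Hom (Mo M S) (sub (imgP phi)).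
Proof.
  exists (fun x s => exist _ (phi x s) (ex_intro _ s eq_refl)).
  intros x a b h; simpl. apply fn_mono, h.
Defined.

Lemma img_closed (Xi : Type) (M : Monad Xi) (S : SPos Xi) (B : algebra M)
  (phi : Hom (Mo M S) (acar B)) : is_morph (A := free M S) (B := B) phi ->
  forall x u, imgP phi x (api B x (Mf M (incl (imgP phi)) x u)).
Proof.
  intros hm x u.
  assert (Hsj : forall y, surjective_on (coreH phi y)).
  { intros y [b [s Hs]]. exists s. apply sig_eq. simpl. exact Hs. }
  destruct (M_surj (m := M) Hsj u) as [v Hv].
  exists (flat M S x v).
  change (phi x (api (free M S) x v) = api B x (Mf M (incl (imgP phi)) x u)).
  rewrite hm, <- Hv.
  f_equal. apply Mf_comp_ext. reflexivity.
Qed.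

Definition imgA (Xi : Type) (M : Monad Xi) (S : SPos Xi) (B : algebra M)
  (phi : Hom (Mo M S) (acar B)) (hm : is_morph (A := free M S) (B := B) phi) : algebra M :=
  subA (img_closed hm).

Lemma core_morph (Xi : Type) (M : Monad Xi) (S : SPos Xi) (B : algebra M)
  (phi : Hom (Mo M S) (acar B)) (hm : is_morph (A := free M S) (B := B) phi) :
  is_morph (A := free M S) (B := imgA hm) (coreH phi).
Proof.
  intros x s. apply sig_eq. simpl. pose proof (hm x s) as E. simpl in E. rewrite E.
  f_equal. apply Mf_comp_ext. reflexivity.
Qed.

Lemma finite_sig (T : Type) (P : T -> Prop) : finite_type T -> finite_type {a : T | P a}.
Proof.
  intros [l Hl].
  assert (H : exists l' : list {a : T | P a}, forall a (h : P a), In a l -> In (exist _ a h) l').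
  { clear Hl. induction l as [|a l [l' IH]].
    - exists nil. intros a h [].
    - destruct (classic (P a)) as [ha|ha].
      + exists (exist _ a ha :: l'). intros b hb [E|E].
        * subst b. left. apply sig_eq. reflexivity.
        * right; auto.
      + exists l'. intros b hb [E|E]; [subst; contradiction|auto]. }
  destruct H as [l' H]. exists l'. intros [a h]. apply H, Hl.
Qed.

Lemma finite_prod (T U : Type) : finite_type T -> finite_type U -> finite_type (T * U).
Proof.
  intros [l1 H1] [l2 H2]. exists (list_prod l1 l2). intros [a b].
  apply in_prod; auto.
Qed.

Lemma img_finitary (Xi : Type) (M : Monad Xi) (S : SPos Xi) (B : algebra M)
  (phi : Hom (Mo M S) (acar B)) (hm : is_morph (A := free M S) (B := B) phi) :
  alphabet S -> (forall x, finite_type (acar B x)) -> finitary (imgA hm).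
Proof.
  intros [hS [l Hl]] hB. split.
  - intros x. apply finite_sig, hB.
  - set (q := coreH phi).
    exists (fun x b => exists a : S x, q x (sing M S x a) = b). split.
    + exists (map (fun p : {x : Xi & S x} =>
         existT (fun x => sub (imgP phi) x) (projT1 p) (q _ (sing M S _ (projT2 p)))) l).
      intros x b [a Ha]. subst b.
      apply (in_map (fun p : {x : Xi & S x} =>
         existT (fun x => sub (imgP phi) x) (projT1 p) (q _ (sing M S _ (projT2 p))))
         l (existT _ x a)). apply Hl.
    + intros x b.
      set (C' := fun x b => exists a : S x, q x (sing M S x a) = b).
      pose (fr := fun y (a : S y) => exist (C' y) (q y (sing M S y a)) (ex_intro _ a eq_refl)
                   : sub C' y).
      assert (hr : forall y (a c : S y), le a c -> le (s := sub C') (fr y a) (fr y c)).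
      { intros y a c h. apply hS in h. subst c. apply le_refl. }
      set (r := @Build_Hom _ S (sub C') fr hr).
      destruct b as [b [s Hs]].
      exists (Mf M r x s).
      apply sig_eq.
      change (proj1_sig (api (imgA hm) x (Mf M (incl _) x (Mf M r x s))) = b).
      rewrite (@Mf_comp2 _ M _ _ _ _ _ _ q (sing M S)) by reflexivity.
      rewrite <- core_morph. simpl. rewrite flat_Msing. exact Hs.
Qed.

Definition gA (Xi : Type) (M : Monad Xi) (S : SPos Xi) (A : algebra M) (zeta : Xi)
  (phi : Hom (Mo M S) (acar A)) (a : acar A zeta) : Hom (holed S zeta) (acar A).
Proof.
  exists (fun x c => match c with
                     | inl c0 => phi x (sing M S x c0)
                     | inr e => eq_rect zeta (fun y => acar A y) a x (eq_sym e)
                     end).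
  intros x c d h; simpl in h; subst; apply le_refl.
Defined.

Definition kA (Xi : Type) (M : Monad Xi) (S : SPos Xi) (A : algebra M) (zeta : Xi)
  (phi : Hom (Mo M S) (acar A)) (a b : acar A zeta) (hab : le a b) :
  Hom (holed S zeta) (ordrel (acar A)).
Proof.
  unshelve eexists (fun x c => exist _ (gA phi a x c, gA phi b x c) _).
  - destruct c as [c0|e]; simpl.
    + apply le_refl.
    + destruct e. exact hab.
  - intros x c d h; simpl in h; subst; apply le_refl.
Defined.

Lemma deriv_rec (Xi : Type) (M : Monad Xi) (S : SPos Xi) (A : algebra M) (zeta xi : Xi)
  (L : Mo M S xi -> Prop) (p : Mo M (holed S zeta) xi) :
  recognises A L -> recognises A (fun s => L (fill p s)).
Proof.
  intros [phi [hm [P [HP HL]]]].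
  set (f := fun a => api A xi (Mf M (gA phi a) xi p)).
  assert (Hf : forall s, phi xi (fill p s) = f (phi zeta s)).
  { intros s. unfold fill, f. pose proof (hm xi (Mf M (hole_subst s) xi p)) as E.
    simpl in E. rewrite E. f_equal.
    symmetry. apply Mf_comp_ext. intros x [c0|e]; simpl.
    - reflexivity.
    - destruct e. reflexivity. }
  assert (Hmono : forall a b, le a b -> le (f a) (f b)).
  { intros a b hab. unfold f. apply fn_mono. apply M_order.
    exists (Mf M (kA phi hab) xi p). split.
    - symmetry. apply Mf_comp_ext. intros; reflexivity.
    - symmetry. apply Mf_comp_ext. intros; reflexivity. }
  exists phi. split; [exact hm|].
  exists (fun a => P (f a)). split.
  - intros a b Ha hab. eapply HP; [exact Ha|]. apply Hmono, hab.
  - intros s. rewrite <- Hf. apply HL.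
Qed.

Lemma two_img (Xi : Type) (M : Monad Xi) (V : algebra M -> Prop) (S : SPos Xi)
  (A1 A2 : algebra M) (phi1 : Hom (Mo M S) (acar A1)) (phi2 : Hom (Mo M S) (acar A2)) :
  pseudo_variety V -> alphabet S -> V A1 -> V A2 ->
  is_morph (A := free M S) phi1 -> is_morph (A := free M S) phi2 ->
  exists (A : algebra M) (psi : Hom (Mo M S) (acar A))
         (g1 : Hom (acar A) (acar A1)) (g2 : Hom (acar A) (acar A2)),
    V A /\ is_morph (A := free M S) psi /\
    (forall x s, g1 x (psi x s) = phi1 x s) /\ (forall x s, g2 x (psi x s) = phi2 x s).
Proof.
  intros [Hfin [Hquot [Hsub Hacc]]] hS V1 V2 m1 m2.
  pose proof (pair_morph (A := free M S) m1 m2) as hm.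
  exists (imgA hm), (coreH _), (Hom_comp (fstH _ _) (incl _)), (Hom_comp (sndH _ _) (incl _)).
  split; [|split; [apply core_morph| split; intros; reflexivity]].
  set (F := fun b : bool => if b then A1 else A2).
  apply (Hsub bool F (imgA hm)
    (fun i => match i return Hom (acar (imgA hm)) (acar (F i)) with
              | true => Hom_comp (fstH _ _) (incl _)
              | false => Hom_comp (sndH _ _) (incl _) end)).
  - exists (true :: false :: nil). intros [|]; simpl; auto.
  - intros [|]; simpl; auto.
  - intros [|].
    + exact (@comp_morph _ M (imgA hm) (prodA A1 A2) A1 _ _ (@fst_morph _ M A1 A2) (@incl_morph _ M _ _ (img_closed hm))).
    + exact (@comp_morph _ M (imgA hm) (prodA A1 A2) A2 _ _ (@snd_morph _ M A1 A2) (@incl_morph _ M _ _ (img_closed hm))).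
  - intros x a b. simpl. split.
    + intros [h1 h2] [|]; assumption.
    + intros H. split; [apply (H true) | apply (H false)].
  - apply img_finitary; [exact hS|].
    intros x. apply finite_prod; [apply (proj1 (Hfin _ V1)) | apply (proj1 (Hfin _ V2))].
Qed.

Theorem proposition5p6 (Xi : Type) (M : Monad Xi) (V : algebra M -> Prop) :
  pseudo_variety V -> variety_of_languages (recognised_by V).
Proof.
  intros HV. split; [|split; [|split]].
  - intros S hS xi L1 L2 [A1 [V1 [phi1 [m1 [P1 [HP1 HL1]]]]]] [A2 [V2 [phi2 [m2 [P2 [HP2 HL2]]]]]].
    destruct (two_img HV hS V1 V2 m1 m2) as [A [psi [g1 [g2 [VA [mA [E1 E2]]]]]]].
    exists A. split; [exact VA|]. exists psi. split; [exact mA|].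
    exists (fun a => P1 (g1 xi a) \/ P2 (g2 xi a)). split.
    + intros a b [H|H] hab; [left; eapply HP1 | right; eapply HP2]; eauto; apply fn_mono, hab.
    + intros s. rewrite E1, E2, HL1, HL2. tauto.
  - intros S hS xi L1 L2 [A1 [V1 [phi1 [m1 [P1 [HP1 HL1]]]]]] [A2 [V2 [phi2 [m2 [P2 [HP2 HL2]]]]]].
    destruct (two_img HV hS V1 V2 m1 m2) as [A [psi [g1 [g2 [VA [mA [E1 E2]]]]]]].
    exists A. split; [exact VA|]. exists psi. split; [exact mA|].
    exists (fun a => P1 (g1 xi a) /\ P2 (g2 xi a)). split.
    + intros a b [H H'] hab; split; [eapply HP1 | eapply HP2]; eauto; apply fn_mono, hab.
    + intros s. rewrite E1, E2, HL1, HL2. tauto.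
  - intros S G hS hG xi L psi hpsi [A [VA [phi [m [P [HP HL]]]]]].
    exists A. split; [exact VA|]. exists (Hom_comp phi psi).
    split; [exact (@comp_morph _ M (free M S) (free M G) A _ _ m hpsi)|].
    exists P. split; [exact HP|]. intros s. simpl. apply HL.
  - intros S hS zeta xi L p [A [VA R]]. exists A. split; [exact VA|].
    apply deriv_rec, R.
Qed.
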